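(* Let $K\in\{\mathbb R,\mathbb C,\mathbb H\}$ and let $(E,d)$ be a metric vector space over $K$ such that $d$ is $C_0$-translation invariant and $(C_1,C_2,C_3)$-lipschitz multiplicative. Let $d_0(x,y)=\int_{\mathbb U}d(ux,uy)\,d\mu(u)$, $\delta_0(x,y)=\lim_{n\to\infty}\frac1n d_0(nx,ny)$, let $E_0$ be the maximal linear subspace of $E$ on which $d$ is bounded, let $\|\bar x\|=\delta_0(x,0)$ for $\bar x=x+E_0\in E/E_0$, and let $D$, $D_0$ be the Hausdorff distances for $d$, $d_0$ between classes modulo $E_0$. Then the norm $\|\cdot\|$ is $(C_1,C_2+C_3)$-lipschitz equivalent to $D_0$ and $(C_1^2,C_2')$-lipschitz equivalent to $D$, where $C_2'=C_1C_2+C_1C_3+C_2$.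
   Context: A metric vector space is a topological vector space over $K$ whose topology is generated by the metric $d$. $\mathbb U=\{u\in K:|u|=1\}$, $\mu$ the right-invariant Haar probability measure on $\mathbb U$. $d$ is $C_0$-translation invariant if $d(x+z,y+z)\le d(x,y)+C_0$ for all $x,y,z$. $(C_1,C_2,C_3)$-lipschitz multiplicative ($C_1\ge1$, $C_2,C_3\ge0$) means $C_1^{-1}|\lambda|d(x,y)-C_2|\lambda|-C_3\le d(\lambda x,\lambda y)\le C_1|\lambda|d(x,y)+C_2|\lambda|+C_3$ for all $\lambda\in K$, $x,y\in E$. Hausdorff distance between classes for a distance $\rho$: $\max\big(\inf_{x\in x_0+E_0}\sup_{y\in y_0+E_0}\rho(x,y),\ \inf_{y\in y_0+E_0}\sup_{x\in x_0+E_0}\rho(x,y)\big)$. A distance $\rho$ is $(A,B)$-lipschitz equivalent to $\sigma$ if $A^{-1}\sigma-B\le\rho\le A\sigma+B$ pointwise; here the norm is viewed as the distance $(\bar x,\bar y)\mapsto\|\bar x-\bar y\|$. (Under these hypotheses $\delta_0$ exists and $\|\cdot\|$ is a well-defined norm.) *)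

(* Defs.v *)
From HB Require Import structures.
From mathcomp Require Import all_boot all_order all_algebra.
From mathcomp Require Import all_classical all_reals all_analysis.
Set Implicit Arguments. Unset Strict Implicit. Unset Printing Implicit Defensive.
Import Order.TTheory GRing.Theory Num.Theory.
Import numFieldNormedType.Exports.
Local Open Scope classical_set_scope.
Local Open Scope ring_scope.

(* A quaternion a + b i + c j + e k is stored as ((a, b), (c, e)) in R^4, which
   carries the (Borel) product measurable structure. *)
Definition quat (R : realType) := ((R * R) * (R * R))%type.

Definition qmul {R : realType} (p q : quat R) : quat R :=
  let: ((a1, b1), (c1, e1)) := p in
  let: ((a2, b2), (c2, e2)) := q in
  ((a1 * a2 - b1 * b2 - c1 * c2 - e1 * e2,
    a1 * b2 + b1 * a2 + c1 * e2 - e1 * c2),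
   (a1 * c2 - b1 * e2 + c1 * a2 + e1 * b2,
    a1 * e2 + b1 * c2 - c1 * b2 + e1 * a2)).

Definition qadd {R : realType} (p q : quat R) : quat R :=
  let: ((a1, b1), (c1, e1)) := p in
  let: ((a2, b2), (c2, e2)) := q in
  ((a1 + a2, b1 + b2), (c1 + c2, e1 + e2)).

Definition qsub {R : realType} (p q : quat R) : quat R :=
  let: ((a1, b1), (c1, e1)) := p in
  let: ((a2, b2), (c2, e2)) := q in
  ((a1 - a2, b1 - b2), (c1 - c2, e1 - e2)).

Definition qone {R : realType} : quat R := ((1, 0), (0, 0)).

Definition qabs {R : realType} (q : quat R) : R :=
  let: ((a, b), (c, e)) := q in Num.sqrt (a ^+ 2 + b ^+ 2 + c ^+ 2 + e ^+ 2).

Inductive scalar_kind := KReal | KComplex | KQuat.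

Definition inK {R : realType} (k : scalar_kind) (q : quat R) : Prop :=
  let: ((_, b), (c, e)) := q in
  match k with
  | KReal => b = 0 /\ c = 0 /\ e = 0
  | KComplex => c = 0 /\ e = 0
  | KQuat => True
  end.

Definition unitK {R : realType} (k : scalar_kind) : set (quat R) :=
  [set u | inK k u /\ qabs u = 1].

(* mu is the right-invariant Haar probability measure on U (viewed as a
   measure on the Borel sets of R^4 = H concentrated on U). *)
Definition haar_prob {R : realType} (k : scalar_kind)
    (mu : {measure set (quat R) -> \bar R}) : Prop :=
  [/\ mu setT = 1%E, mu (~` unitK k) = 0%E &
      forall (A : set (quat R)) (v : quat R), measurable A -> A `<=` unitK k ->
        unitK k v -> mu ((fun u => qmul u v) @` A) = mu A].

Section MVS.
Variables (R : realType) (k : scalar_kind) (E : zmodType).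
Variable (smul : quat R -> E -> E) (d : E -> E -> R).

Definition is_metric : Prop :=
  [/\ forall x y, 0 <= d x y,
      forall x y, d x y = 0 <-> x = y,
      forall x y, d x y = d y x &
      forall x y z, d x z <= d x y + d y z].

(* E is a (left) vector space over K with scalar multiplication smul
   (only scalars in K matter) *)
Definition is_K_vector_space : Prop :=
  [/\ forall x, smul qone x = x,
      forall l m x, inK k l -> inK k m -> smul (qmul l m) x = smul l (smul m x),
      forall l m x, inK k l -> inK k m -> smul (qadd l m) x = smul l x + smul m x &
      forall l x y, inK k l -> smul l (x + y) = smul l x + smul l y].

Definition is_tvs_for_d : Prop :=
  (forall x y (e : R), 0 < e -> exists2 r : R, 0 < r &
     forall x' y', d x x' < r -> d y y' < r -> d (x + y) (x' + y') < e) /\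
  (forall l x (e : R), inK k l -> 0 < e -> exists2 r : R, 0 < r &
     forall l' x', inK k l' -> qabs (qsub l l') < r -> d x x' < r ->
       d (smul l x) (smul l' x') < e).

Definition metric_vector_space : Prop :=
  [/\ is_metric, is_K_vector_space & is_tvs_for_d].

Definition translation_invariant (C0 : R) : Prop :=
  forall x y z, d (x + z) (y + z) <= d x y + C0.

Definition lipschitz_multiplicative (C1 C2 C3 : R) : Prop :=
  [/\ 1 <= C1, 0 <= C2, 0 <= C3 &
      forall l x y, inK k l ->
        C1^-1 * qabs l * d x y - C2 * qabs l - C3 <= d (smul l x) (smul l y) /\
        d (smul l x) (smul l y) <= C1 * qabs l * d x y + C2 * qabs l + C3].

Definition linear_subspace (F : set E) : Prop :=
  [/\ F 0, forall x y, F x -> F y -> F (x + y) &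
      forall l x, inK k l -> F x -> F (smul l x)].

Definition d_bounded_on (F : set E) : Prop :=
  exists M : R, forall x y, F x -> F y -> d x y <= M.

Definition maximal_bounded_subspace (E0 : set E) : Prop :=
  [/\ linear_subspace E0, d_bounded_on E0 &
      forall F, linear_subspace F -> d_bounded_on F -> F `<=` E0].

Variable mu : {measure set (quat R) -> \bar R}.

Definition d0 (x y : E) : R :=
  fine (\int[mu]_(u in unitK k) (d (smul u x) (smul u y))%:E)%E.

Definition delta0 (x y : E) : R :=
  lim ((fun n : nat => d0 (x *+ n) (y *+ n) / n%:R) @ \oo).

Definition qnorm (x : E) : R := delta0 x 0.

Definition hausdorff_classes (E0 : set E) (rho : E -> E -> R) (x0 y0 : E) : \bar R :=
  maxe
    (ereal_inf [set ereal_sup [set (rho x y)%:E | y in [set y0 + z | z in E0]]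
                 | x in [set x0 + z | z in E0]])
    (ereal_inf [set ereal_sup [set (rho x y)%:E | x in [set x0 + z | z in E0]]
                 | y in [set y0 + z | z in E0]]).

End MVS.

Definition lipschitz_equiv {R : realType} {T : Type}
    (A B : R) (rho : T -> T -> R) (sigma : T -> T -> \bar R) : Prop :=
  forall x y, ((A^-1)%:E * sigma x y - B%:E <= (rho x y)%:E)%E /\
              ((rho x y)%:E <= A%:E * sigma x y + B%:E)%E.

(* Main.v *)
Require Import Defs.
From HB Require Import structures.
From mathcomp Require Import all_boot all_order all_algebra.
From mathcomp Require Import all_classical all_reals all_analysis.
From mathcomp Require Import lra ring zify.
Import Order.TTheory GRing.Theory Num.Theory.
Import numFieldNormedType.Exports.
Local Open Scope classical_set_scope.
Local Open Scope ring_scope.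
Set Implicit Arguments. Unset Strict Implicit. Unset Printing Implicit Defensive.


Section Meas.
Variable R : realType.

Definition qc (u : quat R) := [:: u.1.1; u.1.2; u.2.1; u.2.2].

Lemma qabs_small (u v : quat R) (s : R) :
  `|u.1.1 - v.1.1| < s -> `|u.1.2 - v.1.2| < s ->
  `|u.2.1 - v.2.1| < s -> `|u.2.2 - v.2.2| < s ->
  qabs (qsub u v) < s *+ 2.
Proof.
case: u => [[a b] [c e]]; case: v => [[a' b'] [c' e']] /=.
rewrite !ltr_norml => /andP[h1 h2] /andP[h3 h4] /andP[h5 h6] /andP[h7 h8].
have s0 : 0 < s by lra.
have -> : s *+ 2 = Num.sqrt ((s *+ 2) ^+ 2) by rewrite sqrtr_sqr ger0_norm // mulrn_wge0 // ltW.
rewrite ltr_sqrt; last by rewrite exprn_gt0 // mulrn_wgt0.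
rewrite !expr2; nra.
Qed.

Definition rbox (q : rat) (m : nat) : set R :=
  `](ratr q - (m.+1%:R)^-1), (ratr q + (m.+1%:R)^-1)[%classic.

Definition box (i : rat * rat * rat * rat * nat) : set (quat R) :=
  let: (q1, q2, q3, q4, m) := i in
  (rbox q1 m `*` rbox q2 m) `*` (rbox q3 m `*` rbox q4 m).

Lemma measurable_box i : measurable (box i).
Proof.
move: i => [[[[q1 q2] q3] q4] m] /=.
by apply: measurableX; apply: measurableX; apply: measurable_itv.
Qed.

Lemma rboxP q m z : rbox q m z <-> `|z - ratr q| < (m.+1%:R)^-1.
Proof.
rewrite /rbox /= in_itv /= ltr_distl.
by [].
Qed.

Lemma tri_small (a b c rho r : R) : `|a - c| < rho -> `|b - c| < rho ->
  rho < r / 8 -> `|a - b| < r / 4.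
Proof.
move=> h1 h2 h3; have := ler_distD c a b; rewrite (distrC c b) => h4.
rewrite (le_lt_trans h4) //; lra.
Qed.

Lemma half_lt (r : R) : 0 < r -> r / 4 *+ 2 < r.
Proof. move=> r0; lra. Qed.
Lemma ab1 (a fv fw e : R) : fv - e < fw -> e <= fv - a -> a < fw.
Proof. move=> *; lra. Qed.
Lemma ab2 (b fv fw e : R) : fw < fv + e -> e <= b - fv -> fw < b.
Proof. move=> *; lra. Qed.

Lemma near_rat (c rho : R) : 0 < rho -> exists q, `|c - ratr q| < rho.
Proof.
move=> r0; have [q] := @rat_in_itvoo R (c - rho) (c + rho) ltac:(lra).
by rewrite in_itv /= => h; exists q; rewrite distrC ltr_distl.
Qed.

Lemma cont_meas (U : set (quat R)) (f : quat R -> R) : measurable U ->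
  (forall u, U u -> forall e, 0 < e -> exists2 r, 0 < r &
     forall v, U v -> qabs (qsub u v) < r -> `|f v - f u| < e) ->
  measurable_fun U f.
Proof.
move=> mU cf.
apply: (measurability _ (measurable_realfun.RGenOpens.measurableE R)) => _ [_ [a [b ->]] <-].
pose P := f @^-1` `]a, b[%classic.
pose B (n : nat) : set (quat R) :=
  if @unpickle (rat * rat * rat * rat * nat)%type n is Some i then
    (if `[< box i `&` U `<=` P >] then box i else set0) else set0.
have -> : U `&` P = U `&` \bigcup_n B n.
  apply/seteqP; split => [v [Uv Pv]|v [Uv [n _ Bv]]]; last first.
    split => //; move: Bv; rewrite /B.
    case: (unpickle n) => // i; case: asboolP => // h bv.
    exact: h.
  split => //.
  have : a < f v < b by move: Pv; rewrite /P /= in_itv.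
  move=> /andP[av vb].
  pose e := Num.min (f v - a) (b - f v).
  have e0 : 0 < e by rewrite lt_min !subr_gt0 av vb.
  have [r r0 hr] := cf v Uv e e0.
  have r8 : 0 < r / 8 by rewrite divr_gt0.
  have [m hm] := ltr_add_invr r8; rewrite add0r in hm.
  set rho := m.+1%:R^-1 in hm.
  have rho0 : 0 < rho by rewrite invr_gt0.
  have [q1 h1] := near_rat v.1.1 rho0.
  have [q2 h2] := near_rat v.1.2 rho0.
  have [q3 h3] := near_rat v.2.1 rho0.
  have [q4 h4] := near_rat v.2.2 rho0.
  pose i := (q1, q2, q3, q4, m).
  have bv : box i v.
    by case: v {Uv Pv av vb e e0 hr} h1 h2 h3 h4 => [[? ?] [? ?]] /= *; split; split; apply/rboxP.
  have sub : box i `&` U `<=` P.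
    move=> w [bw Uw]; rewrite /P /= in_itv /=.
    have : qabs (qsub v w) < r.
      case: w bw {Uw} => [[w1 w2] [w3 w4]] /= [[/rboxP g1 /rboxP g2] [/rboxP g3 /rboxP g4]].
      rewrite -/rho in g1 g2 g3 g4.
      apply: (lt_trans (qabs_small (s := r / 4) _ _ _ _)); last exact: half_lt.
      + exact: (tri_small h1 g1 hm).
      + exact: (tri_small h2 g2 hm).
      + exact: (tri_small h3 g3 hm).
      + exact: (tri_small h4 g4 hm).
    move=> /(hr w Uw); rewrite ltr_distl => /andP[g1 g2].
    have ea : e <= f v - a by rewrite ge_min lexx.
    have eb : e <= b - f v by rewrite ge_min lexx orbT.
    by apply/andP; split; [exact: (ab1 g1 ea) | exact: (ab2 g2 eb)].
  exists (pickle i); first by [].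
  rewrite /B pickleK; case: asboolP => [_|/(_ sub)//]; exact: bv.
apply: measurableI => //; apply: bigcupT_measurable => n.
rewrite /B; case: (unpickle n) => // i; case: asboolP => // _.
exact: measurable_box.
Qed.


Lemma mc11 : measurable_fun setT (fun u : quat R => u.1.1).
Proof. exact: (measurableT_comp measurable_fst measurable_fst). Qed.
Lemma mc12 : measurable_fun setT (fun u : quat R => u.1.2).
Proof. exact: (measurableT_comp measurable_snd measurable_fst). Qed.
Lemma mc21 : measurable_fun setT (fun u : quat R => u.2.1).
Proof. exact: (measurableT_comp measurable_fst measurable_snd). Qed.
Lemma mc22 : measurable_fun setT (fun u : quat R => u.2.2).
Proof. exact: (measurableT_comp measurable_snd measurable_snd). Qed.

Lemma qabsE : (@qabs R) = fun u => Num.sqrt (u.1.1 ^+ 2 + u.1.2 ^+ 2 + u.2.1 ^+ 2 + u.2.2 ^+ 2).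
Proof. by apply: funext => -[[a b] [c e]]. Qed.

Lemma mqabs : measurable_fun setT (@qabs R).
Proof.
rewrite qabsE.
apply: (measurableT_comp (measurable_realfun.continuous_measurable_fun (@sqrt_continuous R))).
apply: measurable_realfun.measurable_funD; last exact: measurable_realfun.measurable_funX mc22.
apply: measurable_realfun.measurable_funD; last exact: measurable_realfun.measurable_funX mc21.
apply: measurable_realfun.measurable_funD; last exact: measurable_realfun.measurable_funX mc12.
exact: measurable_realfun.measurable_funX mc11.
Qed.

Lemma meas_eq (g : quat R -> R) c : measurable_fun setT g -> measurable [set u | g u = c].
Proof.
move=> mg; have := mg measurableT [set c] (measurable_set1 c).
by rewrite setTI.
Qed.

Lemma measurable_unitK k : measurable (unitK k : set (quat R)).
Proof.
have -> : (unitK k : set (quat R)) = [set u | qabs u = 1] `&`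
  (match k with
   | KReal => [set u : quat R | u.1.2 = 0] `&` [set u | u.2.1 = 0] `&` [set u | u.2.2 = 0]
   | KComplex => [set u : quat R | u.2.1 = 0] `&` [set u | u.2.2 = 0]
   | KQuat => setT end).
  apply/seteqP; split => -[[a b] [c e]]; rewrite /unitK /inK /=; case: k => /=.
  - by move=> [[? [? ?]] ?].
  - by move=> [[? ?] ?].
  - by move=> [? ?].
  - by move=> [? [[? ?] ?]].
  - by move=> [? [? ?]].
  - by move=> [? ?].
apply: measurableI; first exact: meas_eq mqabs.
case: k.
- by apply: measurableI; [apply: measurableI|]; apply: meas_eq; [exact: mc12|exact: mc21|exact: mc22].
- by apply: measurableI; apply: meas_eq; [exact: mc21|exact: mc22].
- exact: measurableT.
Qed.

End Meas.

Section Integ.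
Variables (R : realType) (mu : {measure set (quat R) -> \bar R}) (U : set (quat R)).
Hypotheses (mU : measurable U) (muU : mu U = 1%E).

Notation int f := (mu.-integrable U (EFin \o f)).
Notation Rint f := (Rintegral mu U f).

Lemma int_cst (c : R) : int (fun _ => c).
Proof.
apply: (measurable_bounded_integrable (f := fun _ => c) mU).
- by rewrite muU ltry.
- exact: measurable_cst.
- exact: bounded_cst.
Qed.

Lemma int_lin (a : R) f g : int f -> int g -> int (fun u => a * f u + g u).
Proof.
move=> hf hg.
have := integrableD mU (integrableZl mU a hf) hg.
by apply: eq_integrable => // u _ /=; rewrite EFinD EFinM.
Qed.

Lemma Rint_lin (a b c : R) f g : int f -> int g ->
  Rint (fun u => a * f u + b * g u + c) = a * Rint f + b * Rint g + c.
Proof.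
move=> hf hg.
rewrite RintegralD //; last exact: int_cst.
  rewrite RintegralD //; first last.
  - have := integrableZl mU b hg.
    by apply: eq_integrable => // u _ /=; rewrite EFinM.
  - have := integrableZl mU a hf.
    by apply: eq_integrable => // u _ /=; rewrite EFinM.
  rewrite !RintegralZl // Rintegral_cst // muU /= mulr1 //.
have := int_lin a hf (int_lin b hg (int_cst 0)).
by apply: eq_integrable => // u _ /=; rewrite addr0.
Qed.

Lemma int_comb (a b c : R) f g : int f -> int g ->
  int (fun u => a * f u + b * g u + c).
Proof.
move=> hf hg; have := int_lin a hf (int_lin b hg (int_cst c)).
by apply: eq_integrable => // u _ /=; rewrite addrA.
Qed.

Lemma comb_le (a b c : R) f g h : int f -> int g -> int h ->
  (forall u, U u -> f u <= a * g u + b * h u + c) ->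
  Rint f <= a * Rint g + b * Rint h + c.
Proof.
move=> hf hg hh H; rewrite -Rint_lin //.
by apply: le_Rintegral => //; exact: int_comb.
Qed.

Lemma comb_ge (a b c : R) f g h : int f -> int g -> int h ->
  (forall u, U u -> a * g u + b * h u + c <= f u) ->
  a * Rint g + b * Rint h + c <= Rint f.
Proof.
move=> hf hg hh H; rewrite -Rint_lin //.
by apply: le_Rintegral => //; exact: int_comb.
Qed.

End Integ.



Section Fek.
Variable R : realType.

Lemma sub_bound (b : nat -> R) m : (0 < m)%N -> (forall n, 0 <= b n) ->
  (forall p q, b (p + q)%N <= b p + b q) ->
  forall n, b n <= n%:R / m%:R * b m + \sum_(r < m) b r.
Proof.
move=> m0 b0 bs; elim/ltn_ind => n IH.
have K0 : forall r, (r < m)%N -> b r <= \sum_(r < m) b r.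
  move=> r rm; rewrite (bigD1 (Ordinal rm)) //= lerDl sumr_ge0 //.
case: (ltnP n m) => [nm|mn].
  by rewrite (le_trans (K0 n nm)) // lerDr mulr_ge0 // divr_ge0.
have nE : n = (m + (n - m))%N by rewrite subnKC.
rewrite {1}nE (le_trans (bs _ _)) //.
have h := IH (n - m)%N ltac:(lia).
rewrite (le_trans (lerD (lexx _) h)) // natrB //.
have m0' : m%:R != 0 :> R by rewrite pnatr_eq0 -lt0n.
have -> : b m + ((n%:R - m%:R) / m%:R * b m + \sum_(r < m) b r) =
  n%:R / m%:R * b m + \sum_(r < m) b r by field.
exact: lexx.
Qed.

Lemma fek_aux (L bn bm an c K x M eps : R) : 0 < x -> 0 < M -> 0 < eps ->
  0 <= K -> 0 <= c -> an = bn - c -> L <= bn / x ->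
  bn <= x / M * bm + K -> bm / M < L + eps / 3 -> K + c <= eps / 3 * x ->
  `|L - an / x| < eps.
Proof.
move=> x0 M0 e0 K0 c0 -> h1 h2 h3 h4.
have e1 : (bn - c) / x = bn / x - c / x by rewrite mulrBl.
have e2 : (x / M * bm + K) / x = bm / M + K / x.
  by field; rewrite !gt_eqF.
have h5 : bn / x <= bm / M + K / x by rewrite -e2 ler_pM2r // invr_gt0.
have h6 : c / x <= eps / 3 by rewrite ler_pdivrMr //; lra.
have h7 : K / x <= eps / 3 by rewrite ler_pdivrMr //; lra.
have h8 : 0 <= c / x by rewrite divr_ge0 // ltW.
have h9 : 0 <= K / x by rewrite divr_ge0 // ltW.
rewrite e1; move: h1 h3 h5 h6 h7 h8 h9.
set A := bn / x; set B := bm / M; set Cx := c / x; set Kx := K / x => *.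
rewrite ltr_norml; apply/andP; split; lra.
Qed.

Lemma fekete (a : nat -> R) (c : R) : 0 <= c -> (forall n, 0 <= a n) ->
  (forall p q, a (p + q)%N <= a p + a q + c) ->
  cvgn (fun n => a n / n%:R).
Proof.
move=> c0 a0 asub.
pose b n := a n + c.
have b0 n : 0 <= b n by rewrite addr_ge0.
have bs p q : b (p + q)%N <= b p + b q.
  by rewrite /b; move: (asub p q) (a0 p) (a0 q); lra.
pose S := [set b n / n%:R | n in [set n | (0 < n)%N]].
have hS : has_inf S.
  split; first by exists (b 1%N / 1%:R); exists 1%N.
  by exists 0 => _ [n _ <-]; rewrite divr_ge0.
apply/cvg_ex; exists (inf S).
apply/cvgrPdist_lt => eps eps0.
have e3 : 0 < eps / 3 by rewrite divr_gt0.
have [_ [m m0 <-] hm] := inf_adherent e3 hS.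
have hb := sub_bound m0 b0 bs.
have K0 : 0 <= \sum_(r < m) b r by rewrite sumr_ge0.
near=> n.
have n0 : (0 < n)%N by near: n; exact: (nbhs_infty_ge 1).
have hn : (\sum_(r < m) b r + c) / (eps / 3) <= n%:R.
  by near: n; exact: nbhs_infty_ger.
apply: (fek_aux (bn := b n) (bm := b m) (M := m%:R) (K := \sum_(r < m) b r)
  (c := c)) => //.
- by rewrite ltr0n.
- by rewrite ltr0n.
- by rewrite /b addrK.
- by apply: (ge_inf (proj2 hS)); exists n.
- by move: hn; rewrite ler_pdivrMr // mulrC.
Unshelve. all: by end_near.
Qed.


Lemma cmp_lim (u v : nat -> R) (l l' C : R) : u @ \oo --> l -> v @ \oo --> l' ->
  (forall n, (0 < n)%N -> u n <= v n + C / n%:R) -> l <= l'.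
Proof.
move=> ul vl H; apply/ler_addgt0Pr => e e0.
apply: (ler_cvg_to ul (cvgD vl (cvg_cst e))).
near=> n.
have n0 : (0 < n)%N by near: n; exact: (nbhs_infty_ge 1).
have hn : C / e <= n%:R by near: n; exact: nbhs_infty_ger.
apply: (le_trans (H n n0)) => /=; rewrite lerD2l ler_pdivrMr ?ltr0n //.
by move: hn; rewrite ler_pdivrMr // mulrC.
Unshelve. all: by end_near.
Qed.

End Fek.



Lemma dist4_aux (R : realType) (dBD dBA dAD dACc dCcD dAB dBCc dDCc e : R) :
  dBD <= dBA + dAD -> dAD <= dACc + dCcD -> dACc <= dAB + dBCc ->
  dBCc <= dBD + dDCc -> dBA = dAB -> dDCc = dCcD -> dAB < e / 2 ->
  dCcD < e / 2 -> `|dBD - dACc| < e.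
Proof. move=> *; rewrite ltr_norml; apply/andP; split; lra. Qed.

Lemma haus_bounds (R : realType) (T : zmodType) (E0 : set T) (rho : T -> T -> R)
  (x0 y0 : T) (lo hi : R) : E0 0 ->
  (forall z z', E0 z -> E0 z' -> lo <= rho (x0 + z) (y0 + z') <= hi) ->
  (lo%:E <= hausdorff_classes E0 rho x0 y0 <= hi%:E)%E.
Proof.
move=> h0 H.
have sup1 x : [set (x0 + z)%R | z in E0] x ->
    (lo%:E <= ereal_sup [set (rho x y)%:E | y in [set (y0 + z)%R | z in E0]] <= hi%:E)%E.
  move=> [z hz <-]; apply/andP; split.
  - apply: le_ereal_sup_tmp; exists (rho (x0 + z) (y0 + 0))%:E.
      by exists (y0 + 0) => //; exists 0.
    by rewrite lee_fin; case/andP: (H z 0 hz h0).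
  - apply: ge_ereal_sup => _ [y [z' hz' <-] <-]; rewrite lee_fin.
    by case/andP: (H z z' hz hz').
have sup2 y : [set (y0 + z)%R | z in E0] y ->
    (lo%:E <= ereal_sup [set (rho x y)%:E | x in [set (x0 + z)%R | z in E0]] <= hi%:E)%E.
  move=> [z' hz' <-]; apply/andP; split.
  - apply: le_ereal_sup_tmp; exists (rho (x0 + 0) (y0 + z'))%:E.
      by exists (x0 + 0) => //; exists 0.
    by rewrite lee_fin; case/andP: (H 0 z' h0 hz').
  - apply: ge_ereal_sup => _ [x [z hz <-] <-]; rewrite lee_fin.
    by case/andP: (H z z' hz hz').
have X0 : [set (x0 + z)%R | z in E0] (x0 + 0) by exists 0.
have Y0 : [set (y0 + z)%R | z in E0] (y0 + 0) by exists 0.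
rewrite /hausdorff_classes; apply/andP; split.
- rewrite le_max; apply/orP; left.
  apply: le_ereal_inf_tmp => _ [x hx <-].
  by case/andP: (sup1 x hx).
- rewrite ge_max; apply/andP; split.
  + apply: ge_ereal_inf; exists (ereal_sup [set (rho (x0 + 0)%R y)%:E | y in [set (y0 + z)%R | z in E0]]).
      by exists (x0 + 0).
    by case/andP: (sup1 _ X0).
  + apply: ge_ereal_inf; exists (ereal_sup [set (rho x (y0 + 0)%R)%:E | x in [set (x0 + z)%R | z in E0]]).
      by exists (y0 + 0).
    by case/andP: (sup2 _ Y0).
Qed.

Lemma H_d0 (R : realType) (c1 c2 N D : R) : 0 < c1 ->
  c1^-1 * D - c2 <= N -> N <= c1 * D + c2 -> (N - c2) / c1 <= D <= c1 * N + c1 * c2.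
Proof.
move=> c0 h1 h2; apply/andP; split.
  by rewrite ler_pdivrMr // mulrC; lra.
have : D / c1 <= N + c2 by rewrite mulrC; lra.
by rewrite ler_pdivrMr // => h; rewrite -mulrDr mulrC.
Qed.

Lemma H_d (R : realType) (c1 c2 c3 N D dd : R) : 0 < c1 ->
  c1^-1 * D - c2 <= N -> N <= c1 * D + c2 ->
  c1^-1 * dd - (c2 + c3) <= D -> D <= c1 * dd + (c2 + c3) ->
  (N - (c1 * c2 + c1 * c3 + c2)) / c1 ^+ 2 <= dd <=
  c1 ^+ 2 * N + c1 ^+ 2 * c2 + c1 * c2 + c1 * c3.
Proof.
move=> c0 h1 h2 h3 h4.
have /andP[g1 g2] := H_d0 c0 h1 h2.
have /andP[g3 g4] := H_d0 (c2 := c2 + c3) c0 h3 h4.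
apply/andP; split.
- have c20 : 0 < c1 ^+ 2 by rewrite exprn_gt0.
  rewrite ler_pdivrMr // expr2.
  have : N <= c1 * (c1 * dd + (c2 + c3)) + c2.
    by apply: (le_trans h2); rewrite lerD2r ler_pM2l.
  by rewrite mulrDr mulrA [dd * _]mulrC; lra.
- have : dd <= c1 * (c1 * N + c1 * c2) + c1 * (c2 + c3).
    by apply: (le_trans g4); rewrite lerD2r ler_pM2l.
  by rewrite expr2 mulrDr !mulrA; lra.
Qed.

Lemma fin_of (R : realType) (h : \bar R) (lo hi : R) :
  (lo%:E <= h <= hi%:E)%E -> exists2 r, h = r%:E & lo <= r <= hi.
Proof.
case: h => [r||] /andP[h1 h2].
- by exists r => //; apply/andP; split; rewrite -lee_fin.
- by move: h2; rewrite leye_eq.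
- by move: h1; rewrite leeNy_eq.
Qed.

Lemma R1 (R : realType) (c1 c2 c3 N r : R) : 0 < c1 -> 0 <= c3 ->
  r <= c1 * N + c1 * c2 -> c1^-1 * r - (c2 + c3) <= N.
Proof.
move=> c0 c30 h; have : r / c1 <= N + c2 by rewrite ler_pdivrMr // mulrDl ![_ * c1]mulrC.
by rewrite mulrC; lra.
Qed.

Lemma R2 (R : realType) (c1 c2 c3 N r : R) : 0 < c1 -> 0 <= c3 ->
  (N - c2) / c1 <= r -> N <= c1 * r + (c2 + c3).
Proof. by move=> c0 c30; rewrite ler_pdivrMr // mulrC; lra. Qed.

Lemma R3 (R : realType) (c1 c2 c3 N r : R) : 1 <= c1 -> 0 <= c2 -> 0 <= c3 ->
  r <= c1 ^+ 2 * N + c1 ^+ 2 * c2 + c1 * c2 + c1 * c3 ->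
  (c1 ^+ 2)^-1 * r - (c1 * c2 + c1 * c3 + c2) <= N.
Proof.
move=> c1g c20 c30 h.
have c0 : 0 < c1 ^+ 2 by rewrite exprn_gt0 // (lt_le_trans ltr01).
have : r / c1 ^+ 2 <= N + c1 * c2 + c1 * c3 + c2.
  rewrite ler_pdivrMr //; apply: (le_trans h).
  have k1 : c1 * c2 <= c1 ^+ 2 * (c1 * c2).
    by rewrite ler_peMl // ?mulr_ge0 // ?(le_trans ler01) // expr_ge1 // (le_trans ler01).
  have k2 : c1 * c3 <= c1 ^+ 2 * (c1 * c3).
    by rewrite ler_peMl // ?mulr_ge0 // ?(le_trans ler01) // expr_ge1 // (le_trans ler01).
  rewrite !mulrDl ![_ * c1 ^+ 2]mulrC; lra.
by rewrite mulrC; lra.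
Qed.

Lemma R4 (R : realType) (c1 c2 c3 N r : R) : 1 <= c1 ->
  (N - (c1 * c2 + c1 * c3 + c2)) / c1 ^+ 2 <= r ->
  N <= c1 ^+ 2 * r + (c1 * c2 + c1 * c3 + c2).
Proof.
move=> c1g; have c0 : 0 < c1 ^+ 2 by rewrite exprn_gt0 // (lt_le_trans ltr01).
by rewrite ler_pdivrMr // mulrC; lra.
Qed.

Section P7.
Variables (R : realType) (k : scalar_kind) (E : zmodType)
    (smul : quat R -> E -> E) (d : E -> E -> R)
    (C0 C1 C2 C3 : R) (mu : {measure set (quat R) -> \bar R}) (E0 : set E).
Hypotheses (Hmvs : metric_vector_space k smul d)
  (Hti : translation_invariant d C0)
  (Hlm : lipschitz_multiplicative k smul d C1 C2 C3)
  (Hmu : haar_prob k mu)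
  (HE0 : maximal_bounded_subspace k smul d E0).

Definition qz : quat R := ((0, 0), (0, 0)).
Definition qn (n : nat) : quat R := ((n%:R, 0), (0, 0)).
Definition qm1 : quat R := ((-1, 0), (0, 0)).

Lemma inK_qz : inK k qz. Proof. by case: k. Qed.
Lemma inK_qn n : inK k (qn n). Proof. by case: k. Qed.
Lemma inK_qm1 : inK k qm1. Proof. by case: k. Qed.
Lemma inK_qone : inK k (qone : quat R). Proof. by case: k. Qed.

Lemma dge0 x y : 0 <= d x y. Proof. by case: Hmvs => [[]]. Qed.
Lemma dxx x : d x x = 0. Proof. by case: Hmvs => [[_ H _ _] _ _]; apply/H. Qed.
Lemma dC x y : d x y = d y x. Proof. by case: Hmvs => [[]]. Qed.
Lemma dtri x y z : d x z <= d x y + d y z. Proof. by case: Hmvs => [[]]. Qed.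

Lemma smulD l m x : inK k l -> inK k m -> smul (qadd l m) x = smul l x + smul m x.
Proof. by have [_ [_ _ H _] _] := Hmvs; apply: H. Qed.
Lemma smulDr l x y : inK k l -> smul l (x + y) = smul l x + smul l y.
Proof. by have [_ [_ _ _ H] _] := Hmvs; apply: H. Qed.
Lemma smul1 x : smul qone x = x.
Proof. by have [_ [H _ _ _] _] := Hmvs; apply: H. Qed.

Lemma smul_qz x : smul qz x = 0.
Proof.
have := smulD x inK_qz inK_qz.
have -> : qadd qz qz = qz by rewrite /qadd /qz !addr0.
move=> h; apply/eqP; rewrite -(subrr (smul qz x)).
by rewrite {2}h addrK.
Qed.

Lemma qn0 : qn 0 = qz. Proof. by []. Qed.
Lemma qnS n : qn n.+1 = qadd (qn n) qone.
Proof. by rewrite /qn /qadd /= !addr0 natr1. Qed.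

Lemma smul_qn n x : smul (qn n) x = x *+ n.
Proof.
elim: n => [|n IH]; first by rewrite qn0 smul_qz.
by rewrite qnS (smulD _ (inK_qn n) inK_qone) IH smul1 mulrSr.
Qed.

Lemma smul_u0 u : inK k u -> smul u 0 = 0.
Proof.
move=> ku; have := smulDr 0 0 ku; rewrite addr0 => h.
by apply: (addrI (smul u 0)); rewrite addr0 -h.
Qed.

Lemma smul_uMn u x n : inK k u -> smul u (x *+ n) = smul u x *+ n.
Proof.
move=> ku; elim: n => [|n IH]; first by rewrite !mulr0n smul_u0.
by rewrite !mulrSr smulDr // IH.
Qed.

Lemma smul_qm1 x : smul qm1 x = - x.
Proof.
have := smulD x inK_qone inK_qm1.
have -> : qadd qone qm1 = qz by rewrite /qadd /qone /qm1 /qz /= subrr !addr0.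
rewrite smul_qz smul1 => h.
by apply: (addrI x); rewrite -h subrr.
Qed.

Lemma qabs_qn n : qabs (qn n) = n%:R.
Proof.
by rewrite /qabs /qn !expr2 !mul0r !addr0 -expr2 sqrtr_sqr ger0_norm.
Qed.

Lemma C0ge0 : 0 <= C0.
Proof. by have := Hti 0 0 0; rewrite addr0 dxx add0r. Qed.

Lemma C1ge1 : 1 <= C1. Proof. by case: Hlm. Qed.
Lemma C1gt0 : 0 < C1. Proof. exact: lt_le_trans ltr01 C1ge1. Qed.
Lemma C2ge0 : 0 <= C2. Proof. by case: Hlm. Qed.
Lemma C3ge0 : 0 <= C3. Proof. by case: Hlm. Qed.

Lemma lipU u x y : unitK k u ->
  C1^-1 * d x y - C2 - C3 <= d (smul u x) (smul u y) /\
  d (smul u x) (smul u y) <= C1 * d x y + C2 + C3.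
Proof.
case=> ku u1; case: Hlm => _ _ _ /(_ u x y ku); by rewrite u1 !mulr1.
Qed.

Lemma lipN n x y :
  C1^-1 * n%:R * d x y - C2 * n%:R - C3 <= d (x *+ n) (y *+ n) /\
  d (x *+ n) (y *+ n) <= C1 * n%:R * d x y + C2 * n%:R + C3.
Proof.
case: Hlm => _ _ _ /(_ (qn n) x y (inK_qn n)); rewrite !smul_qn qabs_qn //.
Qed.

Lemma tinvR x y z : d x y <= d (x + z) (y + z) + C0.
Proof.
by have := Hti (x + z) (y + z) (- z); rewrite !addrK.
Qed.


Definition F x y : quat R -> R := fun u => d (smul u x) (smul u y).
Local Notation U := (unitK k : set (quat R)).

Lemma mU : measurable U. Proof. exact: measurable_unitK. Qed.

Lemma muU : mu U = 1%E.
Proof.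
case: Hmu => hT hC _.
have h : mu [set: quat R] = (mu U + mu (~` U))%E.
  by rewrite -(setUv U); exact: (measureU mu mU (measurableC mU) (setICr U)).
by move: h; rewrite hT hC adde0 => <-.
Qed.

Lemma contF x y u : U u -> forall e, 0 < e -> exists2 r, 0 < r &
  forall v, U v -> qabs (qsub u v) < r -> `|F x y v - F x y u| < e.
Proof.
move=> [ku _] e e0; have [_ _ [_ Hc]] := Hmvs.
have e2 : 0 < e / 2 by rewrite divr_gt0.
have [r1 r10 h1] := Hc u x (e / 2) ku e2.
have [r2 r20 h2] := Hc u y (e / 2) ku e2.
exists (Num.min r1 r2); first by rewrite lt_min r10 r20.
move=> v [kv _]; rewrite lt_min => /andP[g1 g2].
have a1 := h1 v x kv g1 ltac:(by rewrite dxx).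
have a2 := h2 v y kv g2 ltac:(by rewrite dxx).
rewrite /F.
apply: (dist4_aux (dtri _ (smul u x) _) (dtri _ (smul u y) _)
   (dtri _ (smul v x) _) (dtri _ (smul v y) _) (dC _ _) (dC _ _) a1).
exact: a2.
Qed.

Lemma mF x y : measurable_fun U (F x y).
Proof. exact: (cont_meas mU (@contF x y)). Qed.

Lemma intF x y : mu.-integrable U (EFin \o F x y).
Proof.
apply: (measurable_bounded_integrable mU); first by rewrite muU ltry.
  exact: mF.
rewrite /bounded_near.
apply: filterS (nbhs_pinfty_ge (num_real (C1 * d x y + C2 + C3))) => M hM u Uu /=.
have [_ h] := lipU x y Uu.
by rewrite ger0_norm ?dge0 // (le_trans h).
Qed.

Lemma d0E x y : d0 k smul d mu x y = Rintegral mu U (F x y).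
Proof. by []. Qed.


Local Notation D0 := (d0 k smul d mu).
Local Notation int f := (mu.-integrable U (EFin \o f)).

Lemma le1 f g (a c : R) : int f -> int g -> (forall u, U u -> f u <= a * g u + c) ->
  Rintegral mu U f <= a * Rintegral mu U g + c.
Proof.
move=> hf hg H; have := comb_le mU muU (a := a) (b := 0) (c := c) hf hg hg.
by rewrite mul0r addr0; apply => u Uu; rewrite mul0r addr0; exact: H.
Qed.

Lemma ge1 f g (a c : R) : int f -> int g -> (forall u, U u -> a * g u + c <= f u) ->
  a * Rintegral mu U g + c <= Rintegral mu U f.
Proof.
move=> hf hg H; have := comb_ge mU muU (a := a) (b := 0) (c := c) hf hg hg.
by rewrite mul0r addr0; apply => u Uu; rewrite mul0r addr0; exact: H.
Qed.

Lemma d0_ge0 x y : 0 <= D0 x y.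
Proof. by rewrite d0E; apply: Rintegral_ge0 => u _; exact: dge0. Qed.

Lemma FMn x y n u : U u -> F (x *+ n) (y *+ n) u = d (smul u x *+ n) (smul u y *+ n).
Proof. by case=> ku _; rewrite /F !smul_uMn. Qed.

Lemma d0_mulU x y n : D0 (x *+ n) (y *+ n) <= C1 * n%:R * D0 x y + (C2 * n%:R + C3).
Proof.
rewrite !d0E; apply: le1; [exact: intF|exact: intF|] => u Uu.
by rewrite FMn // addrA; have [_ ->] := lipN n (smul u x) (smul u y).
Qed.

Lemma d0_mulL x y n : C1^-1 * n%:R * D0 x y + (- (C2 * n%:R) - C3) <= D0 (x *+ n) (y *+ n).
Proof.
rewrite !d0E; apply: ge1; [exact: intF|exact: intF|] => u Uu.
by rewrite FMn // addrA; have [-> _] := lipN n (smul u x) (smul u y).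
Qed.

Lemma d0_sub x y p q : D0 (x *+ (p + q)) (y *+ (p + q)) <=
  D0 (x *+ p) (y *+ p) + D0 (x *+ q) (y *+ q) + C0 *+ 2.
Proof.
rewrite !d0E; have := comb_le mU muU (a := 1) (b := 1) (c := C0 *+ 2)
  (intF (x *+ (p + q)) (y *+ (p + q))) (intF (x *+ p) (y *+ p)) (intF (x *+ q) (y *+ q)).
rewrite !mul1r; apply => u Uu; rewrite !mul1r /F !mulrnDr !smulDr; try by case: Uu.
set a := smul u (x *+ p); set b := smul u (x *+ q).
set a' := smul u (y *+ p); set b' := smul u (y *+ q).
have h1 := Hti a a' b.
have h2 := Hti b b' a'.
have h3 := dtri (a + b) (a' + b) (a' + b').
rewrite (addrC b a') (addrC b' a') in h2.
rewrite mulr2n; move: h1 h2 h3; lra.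
Qed.


Lemma d0_tr x y w : D0 (x + w) (y + w) <= 1 * D0 x y + C0.
Proof.
rewrite !d0E; apply: le1; [exact: intF|exact: intF|] => u [ku _].
by rewrite mul1r /F !smulDr //; exact: Hti.
Qed.

Lemma d0_trR x y w : D0 x y <= 1 * D0 (x + w) (y + w) + C0.
Proof.
rewrite !d0E; apply: le1; [exact: intF|exact: intF|] => u [ku _].
by rewrite mul1r /F !smulDr //; exact: tinvR.
Qed.

Lemma E0_lin : linear_subspace k smul E0. Proof. by case: HE0. Qed.
Lemma E0_0 : E0 0. Proof. by case: E0_lin. Qed.
Lemma E0_add x y : E0 x -> E0 y -> E0 (x + y). Proof. by case: E0_lin => _ h _; exact: h. Qed.
Lemma E0_smul u x : inK k u -> E0 x -> E0 (smul u x). Proof. by case: E0_lin => _ _ h; exact: h. Qed.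
Lemma E0_opp x : E0 x -> E0 (- x).
Proof. by move=> h; rewrite -smul_qm1; apply: E0_smul => //; exact: inK_qm1. Qed.
Lemma E0_Mn x n : E0 x -> E0 (x *+ n).
Proof.
move=> h; elim: n => [|n IH]; first by rewrite mulr0n; exact: E0_0.
by rewrite mulrSr; exact: E0_add.
Qed.

Lemma d0_E0 : exists M, forall x e, E0 e ->
  D0 (x + e) 0 <= 1 * D0 x 0 + (C0 + M) /\ D0 x 0 <= 1 * D0 (x + e) 0 + (C0 + M).
Proof.
have [_ [M hM] _] := HE0.
exists M => x e he; split; rewrite !d0E; (apply: le1; [exact: intF|exact: intF|]) => u [ku _];
  rewrite mul1r /F !smul_u0 // smulDr //;
  set a := smul u x; set b := smul u e;
  have Eb : E0 b by exact: E0_smul.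
- have h1 := dtri (a + b) b 0.
  have h2 := Hti a 0 b; rewrite add0r in h2.
  have h3 := hM b 0 Eb E0_0.
  move: h1 h2 h3; lra.
- have h1 := tinvR a 0 b; rewrite add0r in h1.
  have h2 := dtri (a + b) 0 b.
  have h3 := hM 0 b E0_0 Eb.
  move: h1 h2 h3; lra.
Qed.

Definition sq x y n := D0 (x *+ n) (y *+ n) / n%:R.

Lemma sq_cvg x y : cvgn (sq x y).
Proof.
apply: (@fekete R (fun n => D0 (x *+ n) (y *+ n)) (C0 *+ 2)).
- by rewrite mulrn_wge0 // C0ge0.
- by move=> n; exact: d0_ge0.
- by move=> p q; exact: d0_sub.
Qed.

Local Notation delta := (delta0 k smul d mu).

Lemma delta_lim x y : sq x y @ \oo --> delta x y.
Proof. exact: sq_cvg. Qed.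

Lemma delta_le x y : delta x y <= C1 * D0 x y + C2.
Proof.
apply: (cmp_lim (C := C3) (@delta_lim x y) (cvg_cst _)) => n n0.
have nz : n%:R != 0 :> R by rewrite pnatr_eq0 -lt0n.
rewrite /sq ler_pdivrMr ?ltr0n //.
have -> : (C1 * D0 x y + C2 + C3 / n%:R) * n%:R =
  C1 * n%:R * D0 x y + (C2 * n%:R + C3) by field.
exact: d0_mulU.
Qed.

Lemma delta_ge x y : C1^-1 * D0 x y - C2 <= delta x y.
Proof.
apply: (cmp_lim (C := C3) (cvg_cst _) (@delta_lim x y)) => n n0.
have nz : n%:R != 0 :> R by rewrite pnatr_eq0 -lt0n.
rewrite /sq -mulrDl ler_pdivlMr ?ltr0n //.
have -> : (C1^-1 * D0 x y - C2) * n%:R =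
  C1^-1 * n%:R * D0 x y + (- (C2 * n%:R) - C3) + C3 by ring.
by rewrite lerD2r d0_mulL.
Qed.

Lemma delta_tr x y w : delta (x + w) (y + w) = delta x y.
Proof.
apply/le_anti/andP; split.
- apply: (cmp_lim (C := C0) (@delta_lim _ _) (@delta_lim x y)) => n n0.
  rewrite /sq -mulrDl ler_pM2r ?invr_gt0 ?ltr0n // !mulrnDl.
  by have := d0_tr (x *+ n) (y *+ n) (w *+ n); rewrite mul1r.
- apply: (cmp_lim (C := C0) (@delta_lim x y) (@delta_lim _ _)) => n n0.
  rewrite /sq -mulrDl ler_pM2r ?invr_gt0 ?ltr0n // !mulrnDl.
  by have := d0_trR (x *+ n) (y *+ n) (w *+ n); rewrite mul1r.
Qed.

Lemma delta_E0 x e : E0 e -> delta (x + e) 0 = delta x 0.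
Proof.
move=> he; have [M hM] := d0_E0.
apply/le_anti/andP; split.
- apply: (cmp_lim (C := C0 + M) (@delta_lim _ _) (@delta_lim x 0)) => n n0.
  rewrite /sq -mulrDl ler_pM2r ?invr_gt0 ?ltr0n // mulrnDl mul0rn.
  by have [+ _] := hM (x *+ n) (e *+ n) (E0_Mn n he); rewrite mul1r.
- apply: (cmp_lim (C := C0 + M) (@delta_lim x 0) (@delta_lim _ _)) => n n0.
  rewrite /sq -mulrDl ler_pM2r ?invr_gt0 ?ltr0n // mulrnDl mul0rn.
  by have [_ +] := hM (x *+ n) (e *+ n) (E0_Mn n he); rewrite mul1r.
Qed.


Lemma d0_d x y : C1^-1 * d x y - (C2 + C3) <= D0 x y /\ D0 x y <= C1 * d x y + (C2 + C3).
Proof.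
split; rewrite d0E.
- have := ge1 (a := 0) (c := C1^-1 * d x y - (C2 + C3)) (intF x y) (intF x y).
  rewrite mul0r add0r; apply => u Uu; rewrite mul0r add0r.
  by have [h _] := lipU x y Uu; rewrite opprD addrA.
- have := le1 (a := 0) (c := C1 * d x y + (C2 + C3)) (intF x y) (intF x y).
  rewrite mul0r add0r; apply => u Uu; rewrite mul0r add0r.
  by have [_ h] := lipU x y Uu; rewrite addrA.
Qed.

Lemma delta_classes x y z z' : E0 z -> E0 z' -> delta (x + z) (y + z') = delta (x - y) 0.
Proof.
move=> hz hz'.
have -> : delta (x + z) (y + z') = delta (x + z - (y + z') + (y + z')) (0 + (y + z')).
  by rewrite subrK add0r.
rewrite delta_tr.
have -> : x + z - (y + z') = (x - y) + (z - z') by rewrite opprD addrACA.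
by rewrite delta_E0 //; apply: E0_add => //; exact: E0_opp.
Qed.

Lemma main_res :
  lipschitz_equiv C1 (C2 + C3)
    (fun x y => qnorm k smul d mu (x - y))
    (hausdorff_classes E0 (d0 k smul d mu)) /\
  lipschitz_equiv (C1 ^+ 2) (C1 * C2 + C1 * C3 + C2)
    (fun x y => qnorm k smul d mu (x - y))
    (hausdorff_classes E0 d).
Proof.
have c0 := C1gt0.
split => x y; set N := qnorm k smul d mu (x - y).
- have hb : (((N - C2) / C1)%:E <= hausdorff_classes E0 D0 x y <= (C1 * N + C1 * C2)%:E)%E.
    apply: haus_bounds; first exact: E0_0.
    move=> z z' hz hz'; rewrite /N /qnorm -(delta_classes x y hz hz').
    apply: H_d0 => //; [exact: delta_ge|exact: delta_le].
  have [r -> /andP[h1 h2]] := fin_of hb.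
  rewrite -EFinM -EFinB -EFinM -EFinD !lee_fin; split.
  + exact: R1 c0 C3ge0 h2.
  + exact: R2 c0 C3ge0 h1.
- have hb : (((N - (C1 * C2 + C1 * C3 + C2)) / C1 ^+ 2)%:E <= hausdorff_classes E0 d x y <=
      (C1 ^+ 2 * N + C1 ^+ 2 * C2 + C1 * C2 + C1 * C3)%:E)%E.
    apply: haus_bounds; first exact: E0_0.
    move=> z z' hz hz'; rewrite /N /qnorm -(delta_classes x y hz hz').
    have [g1 g2] := d0_d (x + z) (y + z').
    apply: (H_d (D := D0 (x + z) (y + z'))) => //; [exact: delta_ge|exact: delta_le].
  have [r -> /andP[h1 h2]] := fin_of hb.
  rewrite -EFinM -EFinB -EFinM -EFinD !lee_fin; split.
  + exact: R3 C1ge1 C2ge0 C3ge0 h2.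
  + exact: R4 C1ge1 h1.
Qed.

End P7.

Unset Implicit Arguments.

Theorem proposition7 (R : realType) (k : scalar_kind) (E : zmodType)
    (smul : quat R -> E -> E) (d : E -> E -> R)
    (C0 C1 C2 C3 : R) (mu : {measure set (quat R) -> \bar R}) (E0 : set E) :
  metric_vector_space k smul d ->
  translation_invariant d C0 ->
  lipschitz_multiplicative k smul d C1 C2 C3 ->
  haar_prob k mu ->
  maximal_bounded_subspace k smul d E0 ->
  lipschitz_equiv C1 (C2 + C3)
    (fun x y => qnorm k smul d mu (x - y))
    (hausdorff_classes E0 (d0 k smul d mu)) /\
  lipschitz_equiv (C1 ^+ 2) (C1 * C2 + C1 * C3 + C2)
    (fun x y => qnorm k smul d mu (x - y))
    (hausdorff_classes E0 d).
Proof.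
move=> h1 h2 h3 h4 h5.
exact: (@main_res R k E smul d C0 C1 C2 C3 mu E0 h1 h2 h3 h4 h5).
Qed.
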